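(* Let $G=G_0*_HG_1$ be a nondegenerate free product with amalgamation and suppose that $\ker G$ is trivial. Then $G$ is a weak$^*$ Powers group.
   Context: The amalgam is nondegenerate if $([G_0:H]-1)([G_1:H]-1)\ge2$, and $\ker G=\bigcap_{g\in G}gHg^{-1}$. A group $G$ is a weak$^*$ Powers group if for every $f\in G\setminus\{e\}$ and every integer $k\ge1$ there exist a partition $G=D\sqcup E$ and elements $g_1,\dots,g_k\in G$ with $fD\cap D=\varnothing$ and $g_iE\cap g_jE=\varnothing$ for all distinct $i,j$. *)

(* Defs.v *)
From Stdlib Require Import List Arith.
Import ListNotations.

Record Group := {
  carrier :> Type;
  gmul : carrier -> carrier -> carrier;
  ginv : carrier -> carrier;
  gone : carrier;
  gmul_assoc : forall x y z, gmul x (gmul y z) = gmul (gmul x y) z;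
  gmul_1l : forall x, gmul gone x = x;
  gmul_1r : forall x, gmul x gone = x;
  gmul_Vl : forall x, gmul (ginv x) x = gone;
  gmul_Vr : forall x, gmul x (ginv x) = gone
}.

Arguments gmul {g}.
Arguments ginv {g}.
Arguments gone {g}.

Definition is_subgroup (G : Group) (S : G -> Prop) : Prop :=
  S gone /\ (forall x y, S x -> S y -> S (gmul x y)) /\ (forall x, S x -> S (ginv x)).

Definition gprod (G : Group) (l : list G) : G := fold_right gmul gone l.

(* A (nonempty) reduced word for the amalgam G0 *_H G1: a list of labelled
   letters (b, x) with x in G_b \ H (G_false = G0, G_true = G1), consecutive
   letters coming from different factors. *)
Fixpoint labels_alternate (l : list bool) : Prop :=
  match l with
  | b1 :: ((b2 :: _) as t) => b1 <> b2 /\ labels_alternate t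
  | _ => True
  end.

Definition reduced_word (G : Group) (G0 G1 H : G -> Prop) (w : list (bool * G)) : Prop :=
  w <> [] /\
  Forall (fun p : bool * G =>
            (if fst p then G1 (snd p) else G0 (snd p)) /\ ~ H (snd p)) w /\
  labels_alternate (map fst w).

(* G is (internally) the free product of its subgroups G0 and G1 amalgamated
   along H = G0 ∩ G1: G is generated by G0 ∪ G1 and no reduced word represents
   the identity (normal form theorem; Serre, Trees, §1.2). *)
Definition is_amalgam (G : Group) (G0 G1 H : G -> Prop) : Prop :=
  is_subgroup G G0 /\ is_subgroup G G1 /\
  (forall x, H x <-> (G0 x /\ G1 x)) /\
  (forall x : G, exists l : list G, Forall (fun y => G0 y \/ G1 y) l /\ x = gprod G l) /\
  (forall w, reduced_word G G0 G1 H w -> gprod G (map snd w) <> gone).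

(* [K : H] >= n  (n <= index, index a possibly infinite cardinal):
   there are n elements of K lying in pairwise distinct left cosets of H. *)
Definition index_ge (G : Group) (K H : G -> Prop) (n : nat) : Prop :=
  exists a : nat -> G,
    (forall i, i < n -> K (a i)) /\
    (forall i j, i < n -> j < n -> i <> j -> ~ H (gmul (ginv (a i)) (a j))).

(* ([G0:H]-1)([G1:H]-1) >= 2, with indices possibly infinite:
   both indices are >= 2 and at least one of them is >= 3. *)
Definition nondegenerate (G : Group) (G0 G1 H : G -> Prop) : Prop :=
  index_ge G G0 H 2 /\ index_ge G G1 H 2 /\ (index_ge G G0 H 3 \/ index_ge G G1 H 3).

(* ker G = ⋂_{g} g H g^{-1} is trivial *)
Definition trivial_kernel (G : Group) (H : G -> Prop) : Prop :=
  forall x : G, (forall g : G, H (gmul (ginv g) (gmul x g))) -> x = gone.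

Definition weak_star_Powers (G : Group) : Prop :=
  forall f : G, f <> gone -> forall k : nat, 1 <= k ->
    exists (D E : G -> Prop) (g : nat -> G),
      (forall x, D x \/ E x) /\ (forall x, ~ (D x /\ E x)) /\
      (forall x, ~ (D x /\ D (gmul f x))) /\
      (forall i j, i < k -> j < k -> i <> j ->
         forall x y, E x -> E y -> gmul (g i) x <> gmul (g j) y).

(* Main.v *)
Require Import Defs.
From Stdlib Require Import List Arith Lia Classical.
Import ListNotations.

Section GroupFacts.
Variable G : Group.

Lemma mulA (x y z : G) : gmul (gmul x y) z = gmul x (gmul y z).
Proof. symmetry; apply gmul_assoc. Qed.

Lemma mulKV (x y : G) : gmul (ginv x) (gmul x y) = y.
Proof. rewrite gmul_assoc, gmul_Vl, gmul_1l. reflexivity. Qed.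

Lemma mulVK (x y : G) : gmul x (gmul (ginv x) y) = y.
Proof. rewrite gmul_assoc, gmul_Vr, gmul_1l. reflexivity. Qed.

Lemma inv_unique (a b : G) : gmul a b = gone -> b = ginv a.
Proof.
  intro E. rewrite <- (mulKV a b), E, gmul_1r. reflexivity.
Qed.

Lemma inv_mul (x y : G) : ginv (gmul x y) = gmul (ginv y) (ginv x).
Proof.
  symmetry. apply inv_unique. rewrite mulA, (gmul_assoc _ y), gmul_Vr, gmul_1l, gmul_Vr.
  reflexivity.
Qed.

Lemma inv_inv (x : G) : ginv (ginv x) = x.
Proof. symmetry. apply inv_unique. apply gmul_Vl. Qed.

Lemma mul_cancel_l (x y z : G) : gmul x y = gmul x z -> y = z.
Proof. intro E. rewrite <- (mulKV x y), E, mulKV. reflexivity. Qed.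

End GroupFacts.

Section Amalgam.
Variables (G : Group) (G0 G1 H : G -> Prop).
Hypothesis HA : is_amalgam G G0 G1 H.

Definition Gb (b : bool) : G -> Prop := if b then G1 else G0.
Definition letter (b : bool) (a : G) : Prop := Gb b a /\ ~ H a.

Inductive altn : nat -> bool -> bool -> G -> Prop :=
| alt1 b a : letter b a -> altn 1 b b a
| altS n b e a g : letter b a -> altn n (negb b) e g -> altn (S n) b e (gmul a g).

Definition Xb b (g : G) : Prop := exists n e, altn n b e g.
Definition P b (g : G) : Prop := H g \/ Xb (negb b) g.

Lemma Gb_sub b : is_subgroup G (Gb b).
Proof. destruct HA as [s0 [s1 _]]. destruct b; assumption. Qed.

Lemma H_Gb b x : H x -> Gb b x.
Proof.
  destruct HA as [_ [_ [hH _]]]. intro h. apply hH in h. destruct b; simpl; tauto.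
Qed.

Lemma H1 : H gone.
Proof.
  destruct HA as [[a _] [[b _] [hH _]]]. apply hH. tauto.
Qed.

Lemma H_mul x y : H x -> H y -> H (gmul x y).
Proof.
  destruct HA as [[_ [a _]] [[_ [b _]] [hH _]]]. intros hx hy.
  apply hH in hx. apply hH in hy. apply hH. split; [apply a|apply b]; tauto.
Qed.

Lemma H_inv x : H x -> H (ginv x).
Proof.
  destruct HA as [[_ [_ a]] [[_ [_ b]] [hH _]]]. intros hx.
  apply hH in hx. apply hH. split; [apply a|apply b]; tauto.
Qed.

Lemma Gb_mul b x y : Gb b x -> Gb b y -> Gb b (gmul x y).
Proof. destruct (Gb_sub b) as [_ [m _]]. apply m. Qed.

Lemma Gb_inv b x : Gb b x -> Gb b (ginv x).
Proof. destruct (Gb_sub b) as [_ [_ m]]. apply m. Qed.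

Lemma letter_mulr b a h : letter b a -> H h -> letter b (gmul a h).
Proof.
  intros [ga na] hh. split.
  - apply Gb_mul; auto. apply H_Gb; auto.
  - intro c. apply na. rewrite <- (gmul_1r _ a), <- (gmul_Vr _ h), gmul_assoc.
    apply H_mul; auto. apply H_inv; auto.
Qed.

Lemma letter_mull b a h : letter b a -> H h -> letter b (gmul h a).
Proof.
  intros [ga na] hh. split.
  - apply Gb_mul; auto. apply H_Gb; auto.
  - intro c. apply na. rewrite <- (mulKV _ h a). apply H_mul; auto. apply H_inv; auto.
Qed.

Lemma letter_inv b a : letter b a -> letter b (ginv a).
Proof.
  intros [ga na]. split. apply Gb_inv; auto.
  intro c. apply na. rewrite <- (inv_inv _ a). apply H_inv; auto.
Qed.

Lemma alt_absorb_l n b e g h : H h -> altn n b e g -> altn n b e (gmul h g).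
Proof.
  intros hh A. destruct A.
  - constructor. apply letter_mull; auto.
  - rewrite gmul_assoc. constructor; auto. apply letter_mull; auto.
Qed.

Lemma alt_absorb_r n b e g h : H h -> altn n b e g -> altn n b e (gmul g h).
Proof.
  intros hh A. induction A.
  - constructor. apply letter_mulr; auto.
  - rewrite mulA. constructor; auto.
Qed.

Lemma alt_app n b e g : altn n b e g ->
  forall m e' g', altn m (negb e) e' g' -> altn (n + m) b e' (gmul g g').
Proof.
  induction 1; intros m e' g' A'.
  - simpl. replace b with (negb (negb b)) in A' at 1 by (destruct b; reflexivity).
    constructor; auto. destruct b; exact A'.
  - rewrite mulA. simpl. constructor; auto.
Qed.

Lemma alt_inv n b e g : altn n b e g -> altn n e b (ginv g).
Proof.
  induction 1.
  - constructor. apply letter_inv; auto.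
  - rewrite inv_mul. rewrite <- Nat.add_1_r. apply alt_app with (e := negb b); auto.
    rewrite Bool.negb_involutive. constructor. apply letter_inv; auto.
Qed.

Lemma alt_word n b e g : altn n b e g ->
  exists x w, reduced_word G G0 G1 H ((b, x) :: w) /\ g = gprod G (map snd ((b, x) :: w)).
Proof.
  induction 1.
  - exists a, []. split; [|simpl; rewrite gmul_1r; reflexivity].
    split; [discriminate|]. split; [|simpl; trivial].
    constructor; [|constructor]. destruct H0 as [ga na]. simpl. destruct b; simpl in *; tauto.
  - destruct IHaltn as [x [w [[_ [F L]] E]]].
    exists a, ((negb b, x) :: w). split.
    + split; [discriminate|]. split.
      * constructor; auto. destruct H0 as [ga na]. simpl. destruct b; simpl in *; tauto.
      * simpl. split; [destruct b; discriminate|]. exact L.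
    + rewrite E. reflexivity.
Qed.

Lemma alt_ne1 n b e g : altn n b e g -> g <> gone.
Proof.
  intros A E. destruct (alt_word _ _ _ _ A) as [x [w [R Eg]]].
  destruct HA as [_ [_ [_ [_ nf]]]]. apply (nf _ R). rewrite <- Eg. exact E.
Qed.

Lemma Xb_notH n b e g : altn n b e g -> ~ H g.
Proof.
  intros A hg. apply (alt_absorb_r _ _ _ _ (ginv g)) in A; [|apply H_inv; auto].
  rewrite gmul_Vr in A. exact (alt_ne1 _ _ _ _ A eq_refl).
Qed.

Lemma Xb_disj b g : Xb b g -> Xb (negb b) g -> False.
Proof.
  intros [n [e A]] [m [e' B]]. apply alt_inv in B.
  assert (A' : altn n (negb (negb b)) e g) by (rewrite Bool.negb_involutive; auto).
  pose proof (alt_app _ _ _ _ B _ _ _ A') as C. rewrite gmul_Vl in C.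
  exact (alt_ne1 _ _ _ _ C eq_refl).
Qed.

Lemma alt_cases n b e g : altn n b e g ->
  (n = 1 /\ b = e /\ letter b g) \/
  exists n' a g', n = S n' /\ letter b a /\ altn n' (negb b) e g' /\ g = gmul a g'.
Proof.
  destruct 1; [left; auto | right; exists n, a, g; auto].
Qed.

Lemma cover g : H g \/ exists b, Xb b g.
Proof.
  destruct HA as [_ [_ [_ [gen _]]]].
  destruct (gen g) as [l [F E]]. subst g. induction F as [|y l Fy F IH].
  - left. apply H1.
  - simpl. assert (hc : exists c, Gb c y) by (destruct Fy; [exists false|exists true]; auto).
    destruct hc as [c gy].
    destruct IH as [hH | [b [n [e A]]]].
    + destruct (classic (H (gmul y (gprod G l)))) as [h|nh]; [left; auto|].
      right. exists c, 1, c. constructor. split; auto. apply Gb_mul; auto. apply H_Gb; auto.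
    + destruct (Bool.bool_dec b c) as [bc | bc].
      * subst b. destruct (alt_cases _ _ _ _ A) as [[_ [_ [ga na]]] | [n0 [a [g' [_ [[ga na] [A' Eg]]]]]]].
        -- destruct (classic (H (gmul y (gprod G l)))) as [h|nh]; [left; auto|].
           right. exists c, 1, c. constructor. split; auto. apply Gb_mul; auto.
        -- rewrite Eg, gmul_assoc.
           destruct (classic (H (gmul y a))) as [h|nh].
           ++ right. exists (negb c), n0, e. apply alt_absorb_l; auto.
           ++ right. exists c, (S n0), e. constructor; auto. split; auto. apply Gb_mul; auto.
      * assert (b = negb c) by (destruct b, c; simpl; congruence). subst b.
        destruct (classic (H y)) as [h|nh].
        -- right. exists (negb c), n, e. apply alt_absorb_l; auto.
        -- right. exists c, (S n), e. constructor; auto. split; auto.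
Qed.

Lemma cover2 b g : Xb b g \/ P b g.
Proof.
  unfold P. destruct (cover g) as [h | [c X]]; [tauto|].
  destruct (Bool.bool_dec b c) as [bc|bc]; [subst; tauto|].
  assert (c = negb b) by (destruct b, c; simpl; congruence). subst. tauto.
Qed.

Lemma L3 b a y : letter b a -> P b y -> Xb b (gmul a y).
Proof.
  intros la [hy | [n [e A]]].
  - exists 1, b. constructor. apply letter_mulr; auto.
  - exists (S n), e. constructor; auto.
Qed.

Lemma altn_pos n b e g : altn n b e g -> 1 <= n.
Proof. destruct 1; lia. Qed.

Lemma alt_first n b e f : altn n b e f -> 2 <= n ->
  exists a g, letter b a /\ altn (n - 1) (negb b) e g /\ f = gmul a g.
Proof.
  intros A hn. destruct A; [lia|]. exists a, g. simpl. rewrite Nat.sub_0_r. auto.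
Qed.

Lemma alt_last n b e f : altn n b e f -> 2 <= n ->
  exists m x, altn (n - 1) b (negb e) m /\ letter e x /\ f = gmul m x.
Proof.
  induction 1 as [b a la | n b e a g la A IH]; intros hn; [lia|].
  destruct n as [|[|n]].
  - apply altn_pos in A. lia.
  - destruct (alt_cases _ _ _ _ A) as [[_ [Eb lg]] | [n' [a' [g' [En [_ [A' _]]]]]]].
    + subst e. exists a, g. rewrite Bool.negb_involutive. split; [constructor; auto|]. auto.
    + apply altn_pos in A'. lia.
  - destruct IH as [m [x [Am [lx E]]]]; [lia|]. exists (gmul a m), x.
    split; [|split; auto; rewrite E, mulA; reflexivity].
    replace (S (S (S n)) - 1) with (S (S (S n) - 1)) by lia. constructor; auto.
Qed.

Definition conj (t f : G) : G := gmul (ginv t) (gmul f t).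

Lemma conj_conj s t f : conj t (conj s f) = conj (gmul s t) f.
Proof. unfold conj. rewrite inv_mul. rewrite !mulA. reflexivity. Qed.

Section Big.
Variable B : bool.

Definition Good (f : G) : Prop :=
  exists t, (exists c, letter c (conj t f)) \/ (exists n, altn n B (negb B) (conj t f)).

Lemma Good_conj s f : Good (conj s f) -> Good f.
Proof.
  intros [t Ht]. exists (gmul s t). rewrite <- conj_conj. exact Ht.
Qed.

Lemma conj1 f : conj gone f = f.
Proof.
  unfold conj. rewrite gmul_1r. rewrite <- (gmul_1l _ (ginv gone)), gmul_Vr, gmul_1l.
  reflexivity.
Qed.

Lemma Good_even n b f : altn n b (negb b) f -> Good f.
Proof.
  intro A. destruct (Bool.bool_dec b B) as [bB|bB].
  - subst. exists gone. right. exists n. rewrite conj1. auto.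
  - assert (hb : b = negb B) by (destruct b, B; simpl; congruence). subst b.
    destruct (alt_first _ _ _ _ A) as [a [g [la [Ag E]]]].
    { destruct (le_lt_dec 2 n) as [l|l]; auto. destruct (alt_cases _ _ _ _ A) as [[_ [Eb _]] | [n' [? [? [En [_ [A' _]]]]]]]; [destruct B; simpl in Eb; discriminate | apply altn_pos in A'; lia]. }
    exists a. right. exists (n - 1 + 1). unfold conj. rewrite E, mulA, mulKV.
    rewrite Bool.negb_involutive in Ag.
    apply alt_app with (e := B); auto. constructor. auto.
Qed.

Lemma Good_odd n : forall b f, altn n b b f -> Good f.
Proof.
  induction n as [n IH] using lt_wf_ind. intros b f A.
  destruct (le_lt_dec 2 n) as [l|l].
  - destruct (alt_first _ _ _ _ A l) as [a [g [la [Ag E]]]].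
    destruct (alt_last _ _ _ _ Ag) as [m [x [Am [lx Eg]]]].
    { destruct (le_lt_dec 2 (n - 1)) as [l'|l']; auto.
      destruct (alt_cases _ _ _ _ Ag) as [[_ [Eb _]] | [n' [? [? [En [_ [A' _]]]]]]]; [destruct b; simpl in Eb; discriminate | apply altn_pos in A'; lia]. }
    apply Good_conj with (s := a).
    assert (Ec : conj a f = gmul m (gmul x a)).
    { unfold conj. rewrite E, Eg, !mulA, mulKV. reflexivity. }
    rewrite Ec. destruct (classic (H (gmul x a))) as [h|nh].
    + apply (IH (n - 1 - 1)) with (b := negb b); [lia|]. apply alt_absorb_r; auto.
    + apply (Good_even (n - 1 - 1 + 1) (negb b)).
      rewrite Bool.negb_involutive. apply alt_app with (e := negb b); auto.
      rewrite Bool.negb_involutive. constructor. split; auto.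
      apply Gb_mul; [apply lx | apply la].
  - destruct (alt_cases _ _ _ _ A) as [[_ [_ lf]] | [n' [? [? [En [_ [A' _]]]]]]].
    + exists gone. left. exists b. rewrite conj1. auto.
    + apply altn_pos in A'. lia.
Qed.

Lemma Good_Xb f b : Xb b f -> Good f.
Proof.
  intros [n [e A]]. destruct (Bool.bool_dec b e) as [be|be].
  - subst. eapply Good_odd; eauto.
  - assert (e = negb b) by (destruct b, e; simpl; congruence). subst.
    eapply Good_even; eauto.
Qed.

Lemma Good_all f : trivial_kernel G H -> f <> gone -> Good f.
Proof.
  intros TK nf. destruct (classic (H f)) as [h|nh].
  - assert (ex : exists g, ~ H (conj g f)).
    { apply not_all_ex_not. intro all. apply nf. apply TK. exact all. }
    destruct ex as [g ng]. apply Good_conj with (s := g).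
    destruct (cover (conj g f)) as [hh | [b X]]; [contradiction|].
    eapply Good_Xb; eauto.
  - destruct (cover f) as [hh | [b X]]; [contradiction|]. eapply Good_Xb; eauto.
Qed.

Variable k : nat.
Definition small (E : G -> Prop) : Prop :=
  exists g : nat -> G, forall i j, i < k -> j < k -> i <> j ->
    forall x y, E x -> E y -> gmul (g i) x <> gmul (g j) y.

Lemma small_sub E E' u : small E -> (forall y, E' y -> E (gmul u y)) -> small E'.
Proof.
  intros [g Hg] S. exists (fun i => gmul (g i) u). intros i j hi hj ij x y ex ey Eq.
  apply (Hg i j hi hj ij (gmul u x) (gmul u y)); auto.
  rewrite !gmul_assoc. exact Eq.
Qed.

Definition WS (f : G) : Prop :=
  exists E, small E /\ forall x, E x \/ E (gmul f x).

Lemma WS_conj t f : WS (conj t f) -> WS f.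
Proof.
  intros [E [sE cE]]. exists (fun y => E (gmul (ginv t) y)). split.
  - apply small_sub with (E := E) (u := ginv t); auto.
  - intro y. destruct (cE (gmul (ginv t) y)) as [h|h]; [left; auto|right].
    unfold conj in h. rewrite !mulA, mulVK in h. exact h.
Qed.

Variables (a1 a2 c : G).
Hypotheses (la1 : letter B a1) (la2 : letter B a2) (n12 : ~ H (gmul (ginv a1) a2))
  (lc : letter (negb B) c).

Fixpoint q (i : nat) : G := match i with 0 => gone | S i => gmul (gmul a1 c) (q i) end.

Lemma q_add i m : q (i + m) = gmul (q i) (q m).
Proof.
  induction i; simpl. rewrite gmul_1l; reflexivity. rewrite IHi, !mulA. reflexivity.
Qed.

Lemma qZ m y : P B y -> Xb B (gmul (q m) (gmul a2 y)).
Proof.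
  intro hy. induction m; simpl.
  - rewrite gmul_1l. apply L3; auto.
  - rewrite !mulA. apply L3; auto. right. apply L3; auto.
    right. rewrite Bool.negb_involutive. exact IHm.
Qed.

Lemma small_lt i j x y : i < j -> P B x -> P B y ->
  gmul (gmul (q i) a2) x <> gmul (gmul (q j) a2) y.
Proof.
  intros ij hx hy Eq. destruct (Nat.le_exists_sub (S i) j ij) as [m [Ej _]].
  replace j with (i + S m) in Eq by lia. rewrite q_add, !mulA in Eq.
  apply mul_cancel_l in Eq. simpl in Eq. rewrite !mulA in Eq.
  assert (E2 : gmul (gmul (ginv a1) a2) x = gmul c (gmul (q m) (gmul a2 y))).
  { rewrite mulA, Eq, mulKV. reflexivity. }
  apply (Xb_disj B (gmul (gmul (ginv a1) a2) x)).
  - apply L3; auto. split; auto. apply Gb_mul; [apply Gb_inv; apply la1|apply la2].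
  - rewrite E2. apply L3; auto. right. rewrite Bool.negb_involutive. apply qZ; auto.
Qed.

Lemma smallPB : small (P B).
Proof.
  exists (fun i => gmul (q i) a2). intros i j _ _ ij x y hx hy.
  destruct (Nat.lt_total i j) as [l|[l|l]]; [|contradiction|].
  - apply small_lt; auto.
  - intro E. symmetry in E. revert E. apply small_lt; auto.
Qed.

Lemma smallP b : small (P b).
Proof.
  destruct (Bool.bool_dec b B) as [e|e]; [subst; apply smallPB|].
  assert (b = negb B) by (destruct b, B; simpl; congruence). subst.
  apply small_sub with (E := P B) (u := c); [apply smallPB|].
  intros y hy. right. apply L3; auto.
Qed.

Lemma smallX b : small (Xb b).
Proof.
  apply small_sub with (E := P (negb b)) (u := gone); [apply smallP|].
  intros y hy. rewrite gmul_1l. right. rewrite Bool.negb_involutive. auto.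
Qed.

Lemma WS_ell b f : letter b f -> WS f.
Proof.
  intro lf. exists (Xb b). split; [apply smallX|]. intro x.
  destruct (cover2 b x) as [h|h]; [left; auto|right]. apply L3; auto.
Qed.

Lemma WS_hyp n f : altn n B (negb B) f -> WS f.
Proof.
  intro A. destruct (alt_first _ _ _ _ A) as [s [r [ls [Ar E]]]].
  { destruct (le_lt_dec 2 n) as [l|l]; auto. destruct (alt_cases _ _ _ _ A) as [[_ [Eb _]] | [n' [? [? [En [_ [A' _]]]]]]]; [destruct B; simpl in Eb; discriminate | apply altn_pos in A'; lia]. }
  exists (fun y => P B y \/ P B (gmul (ginv s) y)). split.
  - assert (ha : exists a, letter B a /\ ~ H (gmul (ginv s) a)).
    { destruct (classic (H (gmul (ginv s) a1))) as [h1|h1]; [|exists a1; auto].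
      destruct (classic (H (gmul (ginv s) a2))) as [h2|h2]; [|exists a2; auto].
      exfalso. apply n12. replace (gmul (ginv a1) a2)
        with (gmul (ginv (gmul (ginv s) a1)) (gmul (ginv s) a2)).
      + apply H_mul; auto. apply H_inv; auto.
      + rewrite inv_mul, inv_inv, !mulA, mulVK. reflexivity. }
    destruct ha as [a [la na]].
    apply small_sub with (E := Xb B) (u := ginv a); [apply smallX|].
    intros y [hy|hy].
    + apply L3; auto. apply letter_inv; auto.
    + replace (gmul (ginv a) y) with (gmul (gmul (ginv a) s) (gmul (ginv s) y))
        by (rewrite mulA, mulVK; reflexivity).
      apply L3; auto. replace (gmul (ginv a) s) with (ginv (gmul (ginv s) a))
        by (rewrite inv_mul, inv_inv; reflexivity).
      apply letter_inv. split; auto. apply Gb_mul; [apply Gb_inv; apply ls|apply la].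
  - intro x. destruct (cover2 B x) as [[m [e Ax]]|h]; [|left; left; auto].
    right. right. rewrite E, mulA, mulKV. right.
    exists (n - 1 + m), e. apply alt_app with (e := negb B); auto.
    rewrite Bool.negb_involutive. auto.
Qed.

End Big.
End Amalgam.

Theorem proposition5p5 (G : Group) (G0 G1 H : G -> Prop) :
  is_amalgam G G0 G1 H ->
  nondegenerate G G0 G1 H ->
  trivial_kernel G H ->
  weak_star_Powers G.
Proof.
  intros HA [i0 [i1 i3]] TK.
  assert (big : exists B, index_ge G (Gb G G0 G1 B) H 3 /\ index_ge G (Gb G G0 G1 (negb B)) H 2).
  { destruct i3 as [h|h]; [exists false|exists true]; simpl; auto. }
  destruct big as [B [[a [ain adist]] [b [bin bdist]]]].
  set (a1 := gmul (ginv (a 0)) (a 1)). set (a2 := gmul (ginv (a 0)) (a 2)).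
  set (c := gmul (ginv (b 0)) (b 1)).
  assert (la1 : letter G G0 G1 H B a1).
  { split. apply (Gb_mul G G0 G1 H HA); auto. apply (Gb_inv G G0 G1 H HA); auto. apply adist; lia. }
  assert (la2 : letter G G0 G1 H B a2).
  { split. apply (Gb_mul G G0 G1 H HA); auto. apply (Gb_inv G G0 G1 H HA); auto. apply adist; lia. }
  assert (lc : letter G G0 G1 H (negb B) c).
  { split. apply (Gb_mul G G0 G1 H HA); auto. apply (Gb_inv G G0 G1 H HA); auto. apply bdist; lia. }
  assert (n12 : ~ H (gmul (ginv a1) a2)).
  { unfold a1, a2. rewrite inv_mul, inv_inv, !mulA, mulVK. apply adist; lia. }
  intros f nf k hk.
  assert (W : WS G k f).
  { destruct (Good_all G G0 G1 H HA B f TK nf) as [t [[c' lt] | [n A]]].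
    - apply (WS_conj G k t). exact (WS_ell G G0 G1 H HA B k a1 a2 c la1 la2 n12 lc c' _ lt).
    - apply (WS_conj G k t). exact (WS_hyp G G0 G1 H HA B k a1 a2 c la1 la2 n12 lc n _ A). }
  destruct W as [E [[g sg] cE]].
  exists (fun x => ~ E x), E, g. split; [|split; [|split]].
  - intro x. destruct (classic (E x)); tauto.
  - intros x. tauto.
  - intros x [h1 h2]. destruct (cE x); contradiction.
  - exact sg.
Qed.
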